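(* Let $\mathbb F_q$ be a finite field with $q$ elements, let $n\ge 2$, let $a_1,\dots,a_n,b\in\mathbb F_q^*$, and let $m_1,\dots,m_n,k,k_1,\dots,k_n$ be positive integers. Put $M=\operatorname{lcm}[m_1,\dots,m_n]$ and $d_j=\gcd(m_j,q-1)$ for $j=1,\dots,n$. Assume that $$\gcd\Bigl(\sum_{j=1}^n \frac{k_jM}{m_j}-kM,\;q-1\Bigr)=1.$$ Then $$N\bigl[(a_1x_1^{m_1}+\dots+a_nx_n^{m_n})^k=bx_1^{k_1}\cdots x_n^{k_n}\bigr]=(q-1)^{n-1}+N\bigl[a_1x_1^{d_1}+\dots+a_nx_n^{d_n}=0\bigr]-\frac{q}{q-1}\,N^*\bigl[a_1x_1^{d_1}+\dots+a_nx_n^{d_n}=0\bigr].$$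
   Context: For polynomials $f_1,f_2$ over $\mathbb F_q$, $N[f_1(x_1,\dots,x_n)=f_2(x_1,\dots,x_n)]$ denotes the number of solutions $(x_1,\dots,x_n)\in\mathbb F_q^n$ of the equation, and $N^*[\cdot]$ denotes the number of such solutions with $x_1\cdots x_n\ne 0$. $\mathbb F_q^*=\mathbb F_q\setminus\{0\}$. *)

(* Defs.v *)
From HB Require Import structures.
From mathcomp Require Import all_boot all_order all_algebra all_field.
Set Implicit Arguments. Unset Strict Implicit. Unset Printing Implicit Defensive.
Import Order.TTheory GRing.Theory Num.Theory.
Local Open Scope ring_scope.

Definition Ncount (F : finFieldType) (n : nat) (P : {ffun 'I_n -> F} -> bool) : nat :=
  #|[set x : {ffun 'I_n -> F} | P x]|.

Definition Nstar (F : finFieldType) (n : nat) (P : {ffun 'I_n -> F} -> bool) : nat :=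
  #|[set x : {ffun 'I_n -> F} | P x && [forall i, x i != 0]]|.

(* Main.v *)
Require Import Defs.
From HB Require Import structures.
From mathcomp Require Import all_boot all_order all_algebra all_field.
From mathcomp Require Import ring.
Import Order.TTheory GRing.Theory Num.Theory.
Set Implicit Arguments. Unset Strict Implicit.
Local Open Scope ring_scope.

Section OneD.
Variable F : finFieldType.

Lemma fermat (t : F) : t != 0 -> t ^+ #|F|.-1 = 1.
Proof.
move=> tnz; have h := expf_card t.
have q0 : (0 < #|F|)%N by apply/card_gt0P; exists t.
move: h; rewrite -(prednK q0) exprS => h.
by apply: (mulfI tnz); rewrite h mulr1.
Qed.

Lemma pow_gcd1 (t : F) a b : t ^+ a = 1 -> t ^+ b = 1 -> t ^+ gcdn a b = 1.
Proof.
case: a => [|a] ha hb; first by rewrite gcd0n.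
case: (egcdnP b (ltn0Sn a)) => km kn E _.
have : t ^+ (km * a.+1) = t ^+ (kn * b + gcdn a.+1 b) by rewrite E.
by rewrite exprD !(mulnC km) (mulnC kn) !exprM ha hb !expr1n mul1r => <-.
Qed.

Definition cnt (m : nat) (s : F) : nat := (\sum_(t : F) (t ^+ m == s))%N.

Lemma cnt_sum m : (\sum_s cnt m s)%N = #|F|.
Proof.
rewrite /cnt exchange_big /= -sum1_card; apply: eq_bigr => t _.
rewrite (bigD1 (t ^+ m)) //= eqxx big1 // => s /negPf.
by rewrite eq_sym => ->.
Qed.

Lemma cnt0 m : (0 < m)%N -> cnt m 0 = 1%N.
Proof.
move=> m0; rewrite /cnt (bigD1 0) // big1 /=.
  by rewrite expf_eq0 m0 eqxx.
move=> t tn0; by rewrite expf_eq0 m0 (negPf tn0).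
Qed.

Lemma cnt_fiber m s : (0 < m)%N -> s != 0 -> cnt m s = 0%N \/ cnt m s = cnt m 1.
Proof.
move=> m0 snz; case: (boolP [exists t : F, t ^+ m == s]) => [/existsP [t0 /eqP ht0]|].
  right; have t0nz : t0 != 0.
    by apply: contraNneq snz => e; rewrite -ht0 e expf_eq0 m0 eqxx.
  rewrite /cnt (reindex_inj (mulfI t0nz)) /=; apply: eq_bigr => u _.
  by rewrite exprMn -ht0 -{2}(mulr1 (t0 ^+ m)) (inj_eq (mulfI _)) // expf_eq0 negb_and t0nz orbT.
move/existsPn => h; left; rewrite /cnt big1 // => t _; by rewrite (negPf (h t)).
Qed.

Lemma cnt_gcd m : (0 < m)%N -> forall s, cnt m s = cnt (gcdn m #|F|.-1) s.
Proof.
move=> m0; set g := gcdn m _.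
have g0 : (0 < g)%N by rewrite gcdn_gt0 m0.
have ker : cnt m 1 = cnt g 1.
  apply: eq_bigr => t _; congr nat_of_bool; apply/idP/idP => /eqP h; apply/eqP.
  - have [t0|tnz] := eqVneq t 0.
      by move: h; rewrite t0 expr0n eqn0Ngt m0 /= => /esym/eqP; rewrite oner_eq0.
    exact: (pow_gcd1 h (fermat tnz)).
  - by rewrite -(divnK (dvdn_gcdl m #|F|.-1)) -/g mulnC exprM h expr1n.
have le : forall s, (cnt m s <= cnt g s)%N.
  move=> s; have [->|snz] := eqVneq s 0; first by rewrite !cnt0.
  have [e|ne] := eqVneq (cnt m s) 0%N; first by rewrite e.
  case: (boolP [exists t, t ^+ m == s]); last first.
    move=> /existsPn h; case/eqP: ne.
    by rewrite /cnt big1 // => t _; rewrite (negPf (h t)).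
  move=> /existsP [t /eqP ht].
  have gne : cnt g s != 0%N.
    rewrite /cnt (bigD1 (t ^+ (m %/ g))) //= -exprM divnK ?dvdn_gcdl // ht.
    by rewrite -lt0n; apply: leq_trans (leq_addr _ _); rewrite lt0b.
  case: (cnt_fiber m0 snz) ne => -> // _; rewrite ker.
  by case: (cnt_fiber g0 snz) gne => ->.
have := leqif_sum (P := predT) (fun s _ => leqif_eq (le s)).
rewrite !cnt_sum => -[_]; rewrite eqxx => /esym /forallP h s.
by apply/eqP; apply: (h s).
Qed.
End OneD.

Lemma card_sum (T : finType) (P : pred T) : #|[set x | P x]| = (\sum_x P x)%N.
Proof.
rewrite -sum1_card big_mkcond; apply: eq_bigr => x _; rewrite inE; by case: (P x).
Qed.

Lemma sum_indic (T : finType) (y : T) (G : T -> nat) : (\sum_x (x == y) * G x)%N = G y.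
Proof.
rewrite (bigD1 y) //= eqxx mul1n big1 ?addn0 // => x /negPf ->; by rewrite mul0n.
Qed.

Section Multi.
Variables (F : finFieldType) (n : nat).
Definition pw (e : 'I_n -> nat) (x : {ffun 'I_n -> F}) : {ffun 'I_n -> F} :=
  [ffun j => x j ^+ e j].

Lemma prod_bool (I : finType) (B : I -> bool) : (\prod_i (B i : nat))%N = [forall i, B i].
Proof.
case: (boolP [forall i, B i]) => [/forallP h|/forallPn [i hi]].
  by rewrite big1 // => i _; rewrite h.
by rewrite (bigD1 i) //= (negPf hi) mul0n.
Qed.

Lemma fiber_pw e y : (\sum_x (pw e x == y) = \prod_j cnt (e j) (y j))%N.
Proof.
rewrite /cnt bigA_distr_bigA /=; apply: eq_bigr => f _.
rewrite prod_bool; congr nat_of_bool; apply/eqP/forallP => [<- j|h].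
  by rewrite ffunE.
by apply/ffunP => j; rewrite ffunE; apply/eqP.
Qed.

Lemma cnt_pw (e e' : 'I_n -> nat) (h : forall j (s : F), cnt (e j) s = cnt (e' j) s)
  (Q : pred {ffun 'I_n -> F}) :
  #|[set x | Q (pw e x)]| = #|[set x | Q (pw e' x)]|.
Proof.
have E : forall e0, #|[set x | Q (pw e0 x)]| = (\sum_y Q y * \prod_j cnt (e0 j) (y j))%N.
  move=> e0; rewrite card_sum.
  transitivity (\sum_x \sum_y (pw e0 x == y) * Q y)%N.
    apply: eq_bigr => x _; rewrite (bigD1 (pw e0 x)) //= eqxx mul1n big1 ?addn0 //.
    by move=> y /negPf; rewrite eq_sym => ->.
  rewrite exchange_big /=; apply: eq_bigr => y _.
  rewrite -fiber_pw; case: (Q y) => /=; rewrite ?mul1n.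
    by apply: eq_bigr => x _; rewrite muln1.
  by rewrite big1 // => x _; rewrite muln0.
rewrite !E; apply: eq_bigr => y _; congr (_ * _)%N; apply: eq_bigr => j _; exact: h.
Qed.
End Multi.

Section Root.
Variable F : finFieldType.

Lemma root_unique (del : nat) (cop : coprime del #|F|.-1) (c : F) (cnz : c != 0) :
  #|[set t : F | (t != 0) && (t ^+ del == c)]| = 1%N.
Proof.
pose g (t : F) := if t == 0 then 0 else t ^+ del.
have ginj : injective g.
  move=> t s; rewrite /g.
  have [->|tnz] := eqVneq t 0; have [->|snz] := eqVneq s 0 => //.
  - by move/esym/eqP; rewrite expf_eq0 (negPf snz) andbF.
  - by move/eqP; rewrite expf_eq0 (negPf tnz) andbF.
  move=> e.
  have h1 : (t / s) ^+ del = 1 by rewrite expr_div_n e divff // expf_neq0.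
  have h2 : (t / s) ^+ #|F|.-1 = 1 by apply: fermat; rewrite mulf_neq0 ?invr_eq0.
  by have := pow_gcd1 h1 h2; rewrite (eqP cop) expr1 => /divr1_eq.
have [g' _ gK] := injF_bij ginj.
set t0 := g' c.
have ht0 : g t0 = c by rewrite /t0 gK.
have t0nz : t0 != 0 by apply: contraNneq cnz => e; rewrite -ht0 /g e eqxx.
rewrite -(cards1 t0); apply: eq_card => t; rewrite !inE.
have [->|tnz] := eqVneq t 0; first by rewrite /= eq_sym (negPf t0nz).
rewrite /=; have -> : t ^+ del = g t by rewrite /g (negPf tnz).
by rewrite -ht0 (inj_eq ginj).
Qed.

Lemma root_unique2 (A B : nat) (cop : coprime (if (B <= A)%N then A - B else B - A)%N #|F|.-1)
  (c1 c2 : F) (c1nz : c1 != 0) (c2nz : c2 != 0) :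
  #|[set t : F | (t != 0) && (t ^+ A * c1 == t ^+ B * c2)]| = 1%N.
Proof.
case: leqP cop => hAB cop.
  rewrite -(root_unique cop (mulf_neq0 c2nz (invr_neq0 c1nz))); apply: eq_card => t.
  rewrite !inE; have [//|tnz] := eqVneq t 0; rewrite /=.
  have tB : t ^+ B != 0 by rewrite expf_neq0.
  apply/idP/idP => /eqP h; apply/eqP.
    apply: (mulIf c1nz); rewrite divfK //; apply: (mulfI tB).
    by rewrite mulrA -exprD subnKC.
  by rewrite -(subnKC hAB) exprD -mulrA h divfK.
rewrite -(root_unique cop (mulf_neq0 c1nz (invr_neq0 c2nz))); apply: eq_card => t.
rewrite !inE; have [//|tnz] := eqVneq t 0; rewrite /=.
have tA : t ^+ A != 0 by rewrite expf_neq0.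
apply/idP/idP => /eqP h; apply/eqP.
  apply: (mulIf c2nz); rewrite divfK //; apply: (mulfI tA).
  by rewrite mulrA -exprD subnKC ?(ltnW hAB).
by rewrite -(subnKC (ltnW hAB)) exprD -mulrA h divfK.
Qed.
End Root.

Lemma card_nz (F : finFieldType) n :
  #|[set x : {ffun 'I_n -> F} | [forall i, x i != 0]]| = (#|F|.-1 ^ n)%N.
Proof.
rewrite card_sum.
transitivity (\prod_(j < n) \sum_(t : F) (t != 0%R : nat))%N; last first.
  rewrite prod_nat_const card_ord; congr (_ ^ _)%N.
  rewrite -(cardC1 (0 : F)) -card_sum; apply: eq_card => t; by rewrite !inE.
rewrite bigA_distr_bigA /=; apply: eq_bigr => x _; by rewrite prod_bool.
Qed.

Section Count.
Variables (F : finFieldType) (n : nat) (a : 'I_n -> F) (b : F) (m kk : 'I_n -> nat) (k M : nat).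
Hypotheses (hb : b != 0) (hk : (0 < k)%N) (hM : forall j, (m j %| M)%N).
Definition Eexp := (\sum_j kk j * (M %/ m j))%N.
Hypothesis cop : coprime (if (Eexp <= k * M)%N then k * M - Eexp else Eexp - k * M)%N #|F|.-1.

Definition Sm (x : {ffun 'I_n -> F}) := \sum_j a j * x j ^+ m j.
Definition Pr (x : {ffun 'I_n -> F}) := (Sm x) ^+ k == b * \prod_j x j ^+ kk j.
Definition nz (x : {ffun 'I_n -> F}) := [forall i, x i != 0].
Definition act (t : F) (x : {ffun 'I_n -> F}) : {ffun 'I_n -> F} := [ffun j => t ^+ (M %/ m j) * x j].

Lemma Sm_act t y : Sm (act t y) = t ^+ M * Sm y.
Proof.
rewrite /Sm mulr_sumr; apply: eq_bigr => j _.
by rewrite ffunE exprMn -exprM divnK // mulrCA.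
Qed.

Lemma Pi_act t y : \prod_j (act t y) j ^+ kk j = t ^+ Eexp * \prod_j y j ^+ kk j.
Proof.
rewrite /Eexp -prodrXr -big_split /=; apply: eq_bigr => j _.
by rewrite ffunE exprMn -exprM mulnC.
Qed.

Lemma Pr_act t y : Pr (act t y) = (t ^+ (k * M) * Sm y ^+ k == t ^+ Eexp * (b * \prod_j y j ^+ kk j)).
Proof. by rewrite /Pr Sm_act Pi_act exprMn -exprM mulnC mulrCA. Qed.

Lemma act_inj t : t != 0 -> injective (act t).
Proof.
move=> tnz y y' e; apply/ffunP => j; move/ffunP: e => /(_ j); rewrite !ffunE.
by apply: mulfI; rewrite expf_neq0.
Qed.

Lemma nz_act t y : t != 0 -> nz (act t y) = nz y.
Proof.
move=> tnz; apply: eq_forallb => j; rewrite ffunE mulf_eq0 negb_or expf_neq0 //.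
Qed.

Lemma count_t y : nz y -> #|[set t | (t != 0) && Pr (act t y)]| = (Sm y != 0%R : nat).
Proof.
move=> /forallP ny.
have Pnz : b * \prod_j y j ^+ kk j != 0.
  by rewrite mulf_neq0 //; apply/prodf_neq0 => j _; rewrite expf_neq0.
have [S0|Snz] := eqVneq (Sm y) 0.
  rewrite card_sum big1 // => t _; rewrite Pr_act S0 expr0n eqn0Ngt hk mulr0.
  case: eqVneq => //= tnz.
  by rewrite eq_sym mulf_eq0 expf_eq0 (negPf tnz) andbF (negPf Pnz).
transitivity 1%N => //.
rewrite -(@root_unique2 F (k * M) Eexp cop (Sm y ^+ k) _ (expf_neq0 _ Snz) Pnz).
by apply: eq_card => t; rewrite !inE Pr_act.
Qed.
Lemma main_count :
  (#|[set x | Pr x && nz x]| * #|F|.-1 = #|[set x | (Sm x != 0%R) && nz x]|)%N.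
Proof.
rewrite !card_sum.
transitivity (\sum_(t in predC1 (0%R:F)) \sum_x (Pr x && nz x : nat))%N.
  by rewrite sum_nat_const cardC1 mulnC.
transitivity (\sum_(t in predC1 (0%R:F)) \sum_y (Pr (act t y) && nz y : nat))%N.
  apply: eq_bigr => t; rewrite inE => tnz.
  rewrite (reindex_inj (act_inj tnz)) /=; apply: eq_bigr => y _; by rewrite nz_act.
rewrite exchange_big /=; apply: eq_bigr => y _.
case: (boolP (nz y)) => ny; last by rewrite andbF big1 // => t _; rewrite andbF.
rewrite andbT -count_t // card_sum big_mkcond /=; apply: eq_bigr => t _; rewrite !inE.
by case: (t != 0%R); rewrite ?andbT.
Qed.
End Count.

Lemma Pr_zero (F : finFieldType) n (a : 'I_n -> F) b m kk k (hk : (0 < k)%N)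
  (hkk : forall j, (0 < kk j)%N) x :
  ~~ nz x -> Pr a b m kk k x = (Sm a m x == 0).
Proof.
move=> /forallPn [i /negPn /eqP xi].
by rewrite /Pr (bigD1 i) //= xi expr0n eqn0Ngt hkk /= mul0r mulr0 expf_eq0 hk andTb.
Qed.

Theorem theorem3 (F : finFieldType) (n : nat) (hn : (2 <= n)%N)
  (a : 'I_n -> F) (b : F) (ha : forall j, a j != 0) (hb : b != 0)
  (m : 'I_n -> nat) (k : nat) (kk : 'I_n -> nat)
  (hm : forall j, (0 < m j)%N) (hk : (0 < k)%N) (hkk : forall j, (0 < kk j)%N) :
  let q := #|F| in
  let M := (\big[lcmn/1%N]_(j < n) m j)%N in
  let d := fun j => gcdn (m j) q.-1 in
  gcdz ((\sum_(j < n) ((kk j * (M %/ m j))%N)%:Z) - (k * M)%N%:Z) (q.-1)%:Z = 1 ->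
  ((Ncount (fun x : {ffun 'I_n -> F} =>
       (\sum_(j < n) a j * x j ^+ m j) ^+ k == b * \prod_(j < n) x j ^+ kk j))%:R : rat)
  = (q.-1)%:R ^+ n.-1
    + (Ncount (fun x : {ffun 'I_n -> F} => \sum_(j < n) a j * x j ^+ d j == 0))%:R
    - q%:R / (q.-1)%:R
      * (Nstar (fun x : {ffun 'I_n -> F} => \sum_(j < n) a j * x j ^+ d j == 0))%:R.
Proof.
move=> q M d hg.
have hM : forall j, (m j %| M)%N.
  by move=> j; apply: (biglcmn_sup j) => //.
have cop : coprime (if (Eexp m kk M <= k * M)%N then k * M - Eexp m kk M
                    else Eexp m kk M - k * M)%N #|F|.-1.
  move: hg; rewrite -(big_morph Posz PoszD (erefl _)) /gcdz /= => -[].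
  rewrite -/(Eexp m kk M) /coprime; case: leqP => h.
    rewrite -opprB subzn // abszN => ->; by [].
  by rewrite subzn ?(ltnW h) // => ->.
have MC := main_count a hb hk hM cop.
set A := #|[set x | Pr a b m kk k x && nz x]| in MC.
set Bc := #|[set x | (Sm a m x == 0) && ~~ nz x]|.
set Zn := #|[set x | (Sm a m x == 0) && nz x]|.
have NP : Ncount (fun x : {ffun 'I_n -> F} =>
       (\sum_(j < n) a j * x j ^+ m j) ^+ k == b * \prod_(j < n) x j ^+ kk j) = (A + Bc)%N.
  rewrite /Ncount /A /Bc !card_sum -big_split /=; apply: eq_bigr => x _.
  case: (boolP (nz x)) => nx; first by rewrite andbT andbF addn0.
  by rewrite andbF andbT -(Pr_zero a b m hk hkk nx).
have NZ : #|[set x | Sm a m x == 0]| = (Zn + Bc)%N.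
  rewrite /Zn /Bc !card_sum -big_split /=; apply: eq_bigr => x _.
  by case: (nz x); rewrite ?andbT ?andbF ?addn0.
have NC : (Zn + #|[set x | (Sm a m x != 0%R) && nz x]|)%N = (q.-1 ^ n)%N.
  rewrite -(card_nz F n) /Zn !card_sum -big_split /=; apply: eq_bigr => x _.
  by case: (Sm a m x == 0); rewrite /= ?addn0.
have hcnt : forall j (s : F), cnt (m j) s = cnt (d j) s.
  by move=> j s; apply: cnt_gcd.
have Nd : Ncount (fun x : {ffun 'I_n -> F} => \sum_(j < n) a j * x j ^+ d j == 0) = (Zn + Bc)%N.
  rewrite -NZ /Ncount.
  have := cnt_pw hcnt (fun y : {ffun 'I_n -> F} => \sum_(j < n) a j * y j == 0).
  have E1 : forall e, #|[set x | (fun y : {ffun 'I_n -> F} => \sum_(j < n) a j * y j == 0) (@pw F n e x)]|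
                 = #|[set x : {ffun 'I_n -> F} | \sum_(j < n) a j * x j ^+ e j == 0]|.
    move=> e; apply: eq_card => x; rewrite !inE /=.
    by congr (_ == _); apply: eq_bigr => j _; rewrite ffunE.
  rewrite !E1 => Heq; exact: (esym Heq).
have Sd : Nstar (fun x : {ffun 'I_n -> F} => \sum_(j < n) a j * x j ^+ d j == 0) = Zn.
  have := cnt_pw hcnt (fun y : {ffun 'I_n -> F} => (\sum_(j < n) a j * y j == 0) && nz y).
  have E1 : forall e, (forall j, 0 < e j)%N ->
           #|[set x | (fun y : {ffun 'I_n -> F} => (\sum_(j < n) a j * y j == 0) && nz y) (@pw F n e x)]|
                 = #|[set x : {ffun 'I_n -> F} | (\sum_(j < n) a j * x j ^+ e j == 0) && nz x]|.
    move=> e he; apply: eq_card => x; rewrite !inE /=.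
    congr andb; first by congr (_ == _); apply: eq_bigr => j _; rewrite ffunE.
    by apply: eq_forallb => j; rewrite ffunE expf_eq0 he.
  have Pd : forall j, (0 < d j)%N by move=> j; rewrite /d gcdn_gt0 hm.
  rewrite (E1 m hm) (E1 d Pd) => Heq.
  exact: (esym Heq).
rewrite NP Nd Sd.
have q2 : (1 < q)%N := card_finNzRing_gt1 F.
have q1pos : (0 < q.-1)%N by case: (q) q2 => [|[|q']].
have q1nz : (q.-1)%:R != 0 :> rat by rewrite pnatr_eq0 -lt0n.
have hq : q%:R = (q.-1)%:R + 1 :> rat.
  by rewrite natr1 prednK // ltnW.
have key : (A%:R * (q.-1)%:R + Zn%:R = (q.-1)%:R * (q.-1)%:R ^+ n.-1 :> rat).
  rewrite -exprS prednK ?(ltn_trans _ hn) // -natrM -natrX -natrD; congr _%:R.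
  by rewrite MC addnC NC.
have hZ : Zn%:R = (q.-1)%:R * (q.-1)%:R ^+ n.-1 - A%:R * (q.-1)%:R :> rat.
  by rewrite -key addrC addKr.
rewrite hq !natrD hZ; field.
exact: q1nz.
Qed.
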